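(* Suppose that $X(\mathbb{R})$ is a translation-invariant Banach function space. If $w(x):=e^{cx}$ for $x\in\mathbb{R}$ with a constant $c>0$, then the weighted Banach function space $X(\mathbb{R},w)$ does not satisfy the weak doubling property.
   Context: Banach function spaces on $\mathbb{R}^n$ (here $n=1$): let $\mathfrak{M}^+$ be the set of measurable functions with values in $[0,\infty]$. A Banach function norm $\rho:\mathfrak{M}^+\to[0,\infty]$ satisfies, for all $f,g,f_j\in\mathfrak{M}^+$, $a\ge0$, measurable $E$: (A1) $\rho(f)=0\iff f=0$ a.e., $\rho(af)=a\rho(f)$, $\rho(f+g)\le\rho(f)+\rho(g)$; (A2) $0\le g\le f$ a.e. implies $\rho(g)\le\rho(f)$; (A3) $0\le f_j\uparrow f$ a.e. implies $\rho(f_j)\uparrow\rho(f)$; (A4) $|E|<\infty$ implies $\rho(\chi_E)<\infty$; (A5) $|E|<\infty$ implies $\int_Ef\le C_E\rho(f)$ with $C_E$ independent of $f$. $X$ is the set of measurable complex $f$ with $\rho(|f|)<\infty$, $\|f\|_X=\rho(|f|)$. $X$ is translation-invariant if $\|u(\cdot-y)\|_X=\|u\|_X$ for all $y$ and $u\in X$. For a weight $w$, $X(\mathbb{R}^n,w)=\{f: fw\in X\}$ with $\|f\|_{X(\mathbb{R}^n,w)}=\|fw\|_X$. Weak doubling property: a Banach function space $Z(\mathbb{R}^n)$ has it if there is $\tau>1$ with $\liminf_{R\to\infty}\big(\inf_{y\in\mathbb{R}^n}\|\chi_{B(y,\tau R)}\|_{Z}/\|\chi_{B(y,R)}\|_{Z}\big)<\infty$,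 where $B(y,R)$ is the open ball of radius $R$ centered at $y$. *)

(* Defs.v *)
From HB Require Import structures.
From mathcomp Require Import all_boot all_order all_algebra.
From mathcomp Require Import all_classical all_reals all_analysis.
From mathcomp Require Import measurable_realfun.
Set Implicit Arguments. Unset Strict Implicit. Unset Printing Implicit Defensive.
Import Order.TTheory GRing.Theory Num.Theory.
Import numFieldNormedType.Exports.
Local Open Scope classical_set_scope.
Local Open Scope ring_scope.
Local Open Scope ereal_scope.

Definition Mplus (R : realType) (f : R -> \bar R) : Prop :=
  measurable_fun [set: R] f /\ (forall x, 0 <= f x).

Definition banach_function_norm (R : realType) (rho : (R -> \bar R) -> \bar R) : Prop :=
  (forall f, Mplus f -> 0 <= rho f) /\
  (forall f, Mplus f ->
     (rho f = 0 <-> \forall x \ae (@lebesgue_measure R), f x = 0)) /\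
  (forall f (a : R), Mplus f -> (0 <= a)%R ->
     rho (fun x => a%:E * f x) = a%:E * rho f) /\
  (forall f g, Mplus f -> Mplus g -> rho (f \+ g) <= rho f + rho g) /\
  (forall f g, Mplus f -> Mplus g ->
     (\forall x \ae (@lebesgue_measure R), g x <= f x) -> rho g <= rho f) /\
  (forall (fs : nat -> R -> \bar R) f, (forall j, Mplus (fs j)) -> Mplus f ->
     (\forall x \ae (@lebesgue_measure R),
        {homo (fun j => fs j x) : i j / (i <= j)%N >-> i <= j} /\
        (fun j => fs j x) @ \oo --> f x) ->
     {homo (fun j => rho (fs j)) : i j / (i <= j)%N >-> i <= j} /\
     (fun j => rho (fs j)) @ \oo --> rho f) /\
  (forall E : set R, measurable E -> (@lebesgue_measure R) E < +oo ->
     rho (fun x => (\1_E x)%:E) < +oo) /\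
  (forall E : set R, measurable E -> (@lebesgue_measure R) E < +oo ->
     exists C : R, forall f, Mplus f ->
       \int[@lebesgue_measure R]_(x in E) f x <= C%:E * rho f).

Definition X_norm (R : realType) (rho : (R -> \bar R) -> \bar R) (u : R -> R) : \bar R :=
  rho (fun x => (`|u x|)%:E).

Definition translation_invariant (R : realType) (rho : (R -> \bar R) -> \bar R) : Prop :=
  forall (u : R -> R) (y : R), measurable_fun [set: R] u -> X_norm rho u < +oo ->
    X_norm rho (fun x => u (x - y)%R) = X_norm rho u.

Definition weighted_norm (R : realType) (rho : (R -> \bar R) -> \bar R) (w : R -> R)
  (f : R -> R) : \bar R := X_norm rho (fun x => (f x * w x)%R).

Definition weak_doubling (R : realType) (N : (R -> R) -> \bar R) : Prop :=
  exists tau : R, (1 < tau)%R /\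
    limf_einf (fun r : R =>
        ereal_inf (range (fun y : R =>
          N (\1_(ball y (tau * r)%R)) * inve (N (\1_(ball y r))))))
      (pinfty_nbhs R) < +oo.

(* Main.v *)
Require Import Defs.
From HB Require Import structures.
From mathcomp Require Import all_boot all_order all_algebra.
From mathcomp Require Import all_classical all_reals all_analysis.
From mathcomp Require Import measurable_realfun.
From mathcomp Require Import ring lra.
Import Order.TTheory GRing.Theory Num.Theory.
Import numFieldNormedType.Exports.
Local Open Scope ring_scope.

Section S.
Variables (R : realType) (rho : (R -> \bar R) -> \bar R) (c : R).
Hypothesis Hrho : banach_function_norm rho.
Hypothesis Htr : translation_invariant rho.
Hypothesis c0 : 0 < c.

Definition g (a b : R) := fun x : R => ((`|\1_(ball a b) x * expR (c * x)|)%:E : \bar R).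

Lemma meas_u a b : measurable_fun [set: R] (fun x : R => \1_(ball a b) x * expR (c * x)).
Proof.
apply: measurable_funM; first exact: measurable_indic (measurable_ball _ _).
apply: measurableT_comp; first exact: measurable_expR.
exact: measurable_funM.
Qed.

Lemma Mplus_g a b : Mplus (g a b).
Proof.
split; last by move=> x; rewrite /g lee_fin.
apply: measurableT_comp => //; apply: measurableT_comp => //; exact: meas_u.
Qed.

Lemma Mplus_ind a b : Mplus (fun x => (\1_(ball a b) x : R)%:E).
Proof.
split; last by move=> x; rewrite lee_fin.
apply: measurableT_comp => //; exact: measurable_indic (measurable_ball _ _).
Qed.
Lemma ballP (a b x : R) : ball a b x <-> `|a - x| < b.
Proof. by rewrite -ball_normE /ball_ /=. Qed.

Lemma fin_g a b (b0 : 0 < b) : (rho (g a b) < +oo)%E.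
Proof.
case: Hrho => H0 [HA1 [Hhom [Htri [HA2 [HA3 [HA4 HA5]]]]]].
have e0 : (0 <= expR (c * (a + b)))%R by exact: expR_ge0.
apply: (le_lt_trans (y := (rho (fun x => (expR (c * (a + b)))%:E * (\1_(ball a b) x : R)%:E))%E)).
  apply: HA2; [|exact: Mplus_g|].
  - split; last by move=> x; rewrite -EFinM lee_fin mulr_ge0.
    rewrite (_ : (fun x => _) = EFin \o (fun x => expR (c * (a + b)) * \1_(ball a b) x)%R); last by apply/funext => x; rewrite /= EFinM.
    apply: measurableT_comp => //; apply: measurable_funM => //.
    exact: measurable_indic (measurable_ball _ _).
  - apply: aeW => x; rewrite /g -EFinM lee_fin indicE.
    case: (pselect (ball a b x)) => hx; last by rewrite memNset // !mul0r normr0 mulr0.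
    rewrite mem_set // mul1r mulr1 ger0_norm ?expR_ge0 // ler_expR ler_pM2l //.
    move: hx => /ballP; rewrite ltr_distl; lra.
rewrite Hhom //; last exact: Mplus_ind.
apply: lte_mul_pinfty => //.
apply: HA4; first exact: measurable_ball.
by rewrite lebesgue_measure_ball ?ltry // ltW.
Qed.
Lemma pos_g a b (b0 : 0 < b) : rho (g a b) != 0%E.
Proof.
case: Hrho => H0 [HA1 _].
apply/negP => /eqP /(HA1 _ (Mplus_g a b)) [N [mN N0 sub]].
have : (lebesgue_measure (ball a b : set R) <= lebesgue_measure N)%E.
  apply: le_measure; rewrite ?inE //; first exact: measurable_ball.
  move=> x hx; apply: sub => /= /eqP; rewrite eqe normr_eq0 mulf_eq0.
  by rewrite (gt_eqF (expR_gt0 _)) orbF /indic mem_set // oner_eq0.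
rewrite N0 lebesgue_measure_ball ?(ltW b0) // lee_fin; lra.
Qed.
Lemma shift_g a b s (b0 : 0 < b) :
  rho (g a b) = ((expR (- (c * s)))%:E * rho (g (a + s) b))%E.
Proof.
case: Hrho => H0 [HA1 [Hhom _]].
have := @Htr _ s (meas_u a b) (@fin_g a b b0).
rewrite /X_norm => <-.
rewrite -Hhom ?expR_ge0 //; last exact: Mplus_g.
congr rho; apply/funext => x; rewrite /g -EFinM; congr EFin.
have e2 : (x - s \in (ball a b : set R)) = (x \in (ball (a + s) b : set R)).
  apply/idP/idP; rewrite !inE => /ballP h; apply/ballP.
    by rewrite (_ : a + s - x = a - (x - s)) //; ring.
  by rewrite (_ : a - (x - s) = a + s - x) //; ring.
rewrite /indic e2 mulrBr expRD mulrA normrM (ger0_norm (expR_ge0 _)) mulrC //.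
Qed.
Lemma mono_g y r t (r0 : 0 < r) (t1 : 1 <= t) :
  (rho (g (y + (t - 1) * r) r) <= rho (g y (t * r)))%E.
Proof.
case: Hrho => H0 [HA1 [Hhom [Htri [HA2 _]]]].
apply: HA2; [exact: Mplus_g|exact: Mplus_g|].
apply: aeW => x; rewrite /g lee_fin /indic.
case: (pselect (ball (y + (t - 1) * r) r x)) => hx; last first.
  by rewrite (memNset hx) !mul0r normr0.
have hx' : ball y (t * r) x.
  move: hx => /ballP; rewrite ltr_distl => h; apply/ballP; rewrite ltr_distl.
  have : 0 <= (t - 1) * r by apply: mulr_ge0; lra.
  nra.
by rewrite (mem_set hx) (mem_set hx').
Qed.
Lemma key y r t (r0 : 0 < r) (t1 : 1 < t) :
  ((expR (c * ((t - 1) * r)))%:E <=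
   rho (g y (t * r)) * inve (rho (g y r)))%E.
Proof.
have H0 : forall f, Mplus f -> (0 <= rho f)%E by case: Hrho.
set s := (t - 1) * r.
have tr0 : 0 < t * r by apply: mulr_gt0 => //; lra.
have fn : rho (g y r) \is a fin_num.
  by rewrite ge0_fin_numE ?fin_g ?H0 //; exact: Mplus_g.
have fm : rho (g (y + s) r) \is a fin_num.
  by rewrite ge0_fin_numE ?fin_g ?H0 //; exact: Mplus_g.
have np := @pos_g y r r0.
have nge := H0 _ (Mplus_g y r).
have hs := @shift_g y r s r0.
move: fn fm np nge hs (@mono_g y r t r0 (ltW t1)).
rewrite -/s.
move: (rho (g y r)) (rho (g (y + s) r)) => [n| |] [m| |] //= _ _.
rewrite eqe lee_fin => n0 nge /eqP; rewrite -EFinM eqe => /eqP hn hle.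
have nn : 0 < n by rewrite lt_neqAle eq_sym n0.
have -> : inve n%:E = (n^-1)%:E by rewrite inver (negbTE n0).
apply: le_trans (lee_wpmul2r _ hle); last by rewrite lee_fin invr_ge0.
have hm : m = expR (c * s) * n by rewrite hn mulrA -expRD addrN expR0 mul1r.
by rewrite -EFinM lee_fin hm -mulrA mulfV // mulr1.
Qed.
End S.

Theorem theorem3p6 (R : realType) (rho : (R -> \bar R) -> \bar R) (c : R) :
  banach_function_norm rho -> translation_invariant rho -> 0 < c ->
  ~ weak_doubling (weighted_norm rho (fun x => expR (c * x))).
Proof.
move=> Hrho Htr c0 [t [t1 Hlim]].
rewrite limf_einfE in Hlim.
set L := ereal_sup _ in Hlim.
have [M HM] : exists M : R, (L < M%:E)%E.
  move: Hlim; case: L => [l| |] // _; first by exists (l + 1); rewrite lte_fin; lra.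
  by exists 0; rewrite ltNyr.
have ct0 : 0 < c * (t - 1) by apply: mulr_gt0 => //; lra.
set K := `|M| / (c * (t - 1)) + 1.
have K0 : 0 < K by rewrite /K; apply: ltr_wpDl; [apply: divr_ge0 => //; exact: ltW|].
suff : (M%:E <= L)%E by rewrite leNgt HM.
apply: le_ereal_sup_tmp.
eexists; first by exists [set r : R | K < r]%classic; [exists K; split => //; rewrite num_real|reflexivity].
apply/ereal_infP => _ [r /= Kr <-].
apply/ereal_infP => _ [y _ <-].
have r0 : 0 < r by lra.
have Hk := @key R rho c Hrho Htr c0 y r t r0 t1. apply: (le_trans _ Hk); rewrite lee_fin.
have := expR_ge1Dx (c * ((t - 1) * r)).
have : `|M| <= c * (t - 1) * K.
  rewrite /K mulrDr mulrCA mulfV ?gt_eqF // mulr1; lra.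
have : M <= `|M| by exact: ler_norm.
have : c * (t - 1) * K <= c * (t - 1) * r by rewrite ler_pM2l //; exact: ltW.
rewrite mulrA; lra.
Qed.
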